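(* In $k(Z)$ one has $k(Z)^g=k(b_2,b_3,a_2,a_3)$. More precisely, $a_j^2-b_j^3\neq 0$ for $j=2,3$ and $$u_1=x_1^2=\frac{a_2^2-b_2}{a_2^2-b_2^3}=\frac{a_3^2-b_3}{a_3^2-b_3^3}.$$
   Context: $k$ is a field of characteristic $\neq 2$ containing a primitive fourth root of unity $\sqrt{-1}$. $k(Z)=k(x_1,x_2,x_3,y_1,y_2,y_3)$ where $x_1,x_2,x_3$ are algebraically independent over $k$ and $y_i^2=x_i(x_i^2-1)$. $g$ is the automorphism of $k(Z)$ with $g^*x_i=-x_i$, $g^*y_i=\sqrt{-1}\,y_i$, and $k(Z)^g$ is its fixed field. Set $b_j=x_j/x_1$, $a_j=y_j/y_1$ ($j=2,3$). *)

(* Defs.v *)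
From HB Require Import structures.
From mathcomp Require Import all_boot all_order all_algebra.
Set Implicit Arguments. Unset Strict Implicit. Unset Printing Implicit Defensive.
Import Order.TTheory GRing.Theory Num.Theory.
Local Open Scope ring_scope.

Definition subfield_closed (K : fieldType) (P : K -> Prop) : Prop :=
  [/\ P 1,
      (forall a b, P a -> P b -> P (a - b)),
      (forall a b, P a -> P b -> P (a * b)) &
      (forall a, P a -> P a^-1)].

(* z lies in the subfield of K generated by iota(k) and the elements of S,
   i.e. z belongs to k(S) (k embedded in K via iota). *)
Definition in_gen_field (k K : fieldType) (iota : k -> K) (S : seq K) (z : K)
  : Prop :=
  forall P : K -> Prop, subfield_closed P -> (forall c, P (iota c)) ->
    (forall s, s \in S -> P s) -> P z.

(* Evaluation of a polynomial in three variables over k (encoded as an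
   iterated univariate polynomial) at (x1, x2, x3) in K. *)
Definition eval3 (k K : fieldType) (iota : {rmorphism k -> K})
  (x1 x2 x3 : K) (P : {poly {poly {poly k}}}) : K :=
  let f1 := fun r : {poly k} => (map_poly iota r).[x1] in
  let f2 := fun q : {poly {poly k}} => (map_poly f1 q).[x2] in
  (map_poly f2 P).[x3].

Definition alg_indep3 (k K : fieldType) (iota : {rmorphism k -> K})
  (x1 x2 x3 : K) : Prop :=
  forall P : {poly {poly {poly k}}}, eval3 iota x1 x2 x3 P = 0 -> P = 0.

(* Main.v *)
Require Import Defs.
From HB Require Import structures.
From mathcomp Require Import all_boot all_order all_algebra.
From mathcomp Require Import ring.
Import Order.TTheory GRing.Theory Num.Theory.
Local Open Scope ring_scope.

Lemma eval3_rm (k K : fieldType) (iota : {rmorphism k -> K}) x1 x2 x3 :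
  exists f : {rmorphism {poly {poly {poly k}}} -> K}, forall P, f P = eval3 iota x1 x2 x3 P.
Proof.
pose f1 : {rmorphism {poly k} -> K} := (horner_eval x1 \o map_poly iota)%FUN.
pose f2 : {rmorphism {poly {poly k}} -> K} := (horner_eval x2 \o map_poly f1)%FUN.
by exists (horner_eval x3 \o map_poly f2)%FUN.
Qed.

Lemma indep_facts (k K : fieldType) (iota : {rmorphism k -> K}) x1 x2 x3 :
  alg_indep3 iota x1 x2 x3 ->
  (forall c, x1 - iota c != 0) /\ (x2 != 0 /\ x3 != 0) /\
      [/\ x2 - x1 != 0, x2 + x1 != 0, x3 - x1 != 0 & x3 + x1 != 0].
Proof.
move=> hind.
have nz : forall P, P != 0 -> eval3 iota x1 x2 x3 P != 0.
  by move=> P hP; apply: contra hP => /eqP /hind ->.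
pose f1 : {rmorphism {poly k} -> K} := (horner_eval x1 \o map_poly iota)%FUN.
pose f2 : {rmorphism {poly {poly k}} -> K} := (horner_eval x2 \o map_poly f1)%FUN.
have E : forall P, eval3 iota x1 x2 x3 P = (map_poly f2 P).[x3] by [].
have F2 : forall q, f2 q = (map_poly f1 q).[x2] by [].
have F1 : forall q, f1 q = (map_poly iota q).[x1] by [].
have e1 : forall c, eval3 iota x1 x2 x3 (('X - c%:P)%:P%:P) = x1 - iota c.
  by move=> c; rewrite E map_polyC hornerC /= !horner_evalE map_polyC hornerC /= horner_evalE map_polyXsubC hornerXsubC.
have e2 : forall q : {poly k}, eval3 iota x1 x2 x3 (('X - q%:P)%:P) = x2 - (map_poly iota q).[x1].
  by move=> q; rewrite E map_polyC hornerC /= horner_evalE map_polyXsubC hornerXsubC /= horner_evalE.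
have e3 : forall q : {poly {poly k}}, eval3 iota x1 x2 x3 ('X - q%:P) =
   x3 - (map_poly f1 q).[x2].
  by move=> q; rewrite E map_polyXsubC hornerXsubC /= horner_evalE.
split; [|split; [split|split]].
- by move=> c; rewrite -e1; apply: nz; rewrite !polyC_eq0 polyXsubC_eq0.
- have := e2 0; rewrite map_poly0 horner0 [x2 - 0]subr0 => <-.
  by apply: nz; rewrite ?polyC_eq0 ?polyXsubC_eq0 ?polyX_eq0.
- have := e3 0; rewrite map_poly0 horner0 [x3 - 0]subr0 => <-.
  by apply: nz; rewrite ?polyC_eq0 ?polyXsubC_eq0 ?polyX_eq0.
- have := e2 'X; rewrite map_polyX hornerX => <-.
  by apply: nz; rewrite polyC_eq0 polyXsubC_eq0.
- have := e2 (-'X); rewrite [map_poly iota _]rmorphN hornerN /= map_polyX hornerX opprK => <-.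
  by apply: nz; rewrite polyC_eq0 polyXsubC_eq0.
- have := e3 'X%:P; rewrite map_polyC hornerC /= horner_evalE map_polyX hornerX => <-.
  by apply: nz; rewrite polyXsubC_eq0.
- have := e3 (-'X)%:P; rewrite map_polyC hornerC /= horner_evalE [map_poly iota _]rmorphN hornerN /= map_polyX hornerX opprK => <-.
  by apply: nz; rewrite polyXsubC_eq0.
Qed.

Theorem mainTheorem5
  (k K : fieldType) (iota : {rmorphism k -> K})
  (hchar : (2%:R : k) != 0)
  (i : k) (hi : i ^+ 2 = -1)
  (x1 x2 x3 y1 y2 y3 : K)
  (hindep : alg_indep3 iota x1 x2 x3)
  (hy1 : y1 ^+ 2 = x1 * (x1 ^+ 2 - 1))
  (hy2 : y2 ^+ 2 = x2 * (x2 ^+ 2 - 1))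
  (hy3 : y3 ^+ 2 = x3 * (x3 ^+ 2 - 1))
  (hgen : forall z : K, in_gen_field iota [:: x1; x2; x3; y1; y2; y3] z)
  (g : {rmorphism K -> K}) (hgbij : bijective g)
  (hgk : forall c : k, g (iota c) = iota c)
  (hgx1 : g x1 = - x1) (hgx2 : g x2 = - x2) (hgx3 : g x3 = - x3)
  (hgy1 : g y1 = iota i * y1) (hgy2 : g y2 = iota i * y2)
  (hgy3 : g y3 = iota i * y3) :
  let b2 := x2 / x1 in let b3 := x3 / x1 in
  let a2 := y2 / y1 in let a3 := y3 / y1 in
  [/\ (forall z : K, g z = z <-> in_gen_field iota [:: b2; b3; a2; a3] z),
      a2 ^+ 2 - b2 ^+ 3 != 0,
      a3 ^+ 2 - b3 ^+ 3 != 0,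
      x1 ^+ 2 = (a2 ^+ 2 - b2) / (a2 ^+ 2 - b2 ^+ 3) &
      x1 ^+ 2 = (a3 ^+ 2 - b3) / (a3 ^+ 2 - b3 ^+ 3)].
Proof.
move=> b2 b3 a2 a3.
have [hx1c [[nx2 nx3] [n21m n21p n31m n31p]]] := @indep_facts _ _ _ _ _ _ hindep.
have nx1 : x1 != 0 by have := hx1c 0; rewrite rmorph0 subr0.
have nx1m : x1 - 1 != 0 by have := hx1c 1; rewrite rmorph1.
have nx1p : x1 + 1 != 0 by have := hx1c (-1); rewrite rmorphN rmorph1 opprK.
have nx1s : x1 ^+ 2 - 1 != 0.
  have -> : x1 ^+ 2 - 1 = (x1 - 1) * (x1 + 1) by ring.
  by rewrite mulf_neq0.
have ny1 : y1 != 0.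
  apply/eqP => h; move: hy1; rewrite h expr0n /= => /esym/eqP.
  by rewrite mulf_eq0 (negbTE nx1) (negbTE nx1s).
have key : forall (x y : K), x != 0 -> x - x1 != 0 -> x + x1 != 0 ->
    y ^+ 2 = x * (x ^+ 2 - 1) ->
    (y / y1) ^+ 2 - (x / x1) ^+ 3 != 0 /\
    x1 ^+ 2 = ((y / y1) ^+ 2 - x / x1) / ((y / y1) ^+ 2 - (x / x1) ^+ 3).
  move=> x y nx nm np hy.
  have hsq : (y / y1) ^+ 2 = x * (x ^+ 2 - 1) / (x1 * (x1 ^+ 2 - 1)).
    by rewrite expr_div_n hy hy1.
  have hD : (y / y1) ^+ 2 - (x / x1) ^+ 3 =
       x * (x - x1) * (x + x1) / (x1 ^+ 3 * (x1 ^+ 2 - 1)).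
    by rewrite hsq; field; rewrite nx1 nx1s.
  have hDnz : (y / y1) ^+ 2 - (x / x1) ^+ 3 != 0.
    rewrite hD mulf_neq0 // ?invr_eq0 mulf_neq0 // ?mulf_neq0 //.
  split => //.
  rewrite -[LHS](mulfK hDnz); congr (_ / _).
  by rewrite hD hsq; field; rewrite nx1 nx1s.
have [nD2 hu2] := key x2 y2 nx2 n21m n21p hy2.
have [nD3 hu3] := key x3 y3 nx3 n31m n31p hy3.
split => //.
set I := iota i.
have I2 : I * I = -1 by rewrite -expr2 -rmorphXn hi rmorphN rmorph1.
have h2 : (2 : K) != 0 by rewrite -(rmorph_nat iota) fmorph_eq0.
have h4 : (4 : K) != 0.
  have -> : (4 : K) = 2 * 2 by rewrite -natrM.
  by rewrite mulf_neq0.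
pose inL z := in_gen_field iota [:: b2; b3; a2; a3] z.
have L1 : inL 1 by move=> P [] .
have LB : forall a b, inL a -> inL b -> inL (a - b).
  move=> a b ha hb P PC Pi Ps; case: (PC) => _ hB _ _.
  exact: hB (ha P PC Pi Ps) (hb P PC Pi Ps).
have LM : forall a b, inL a -> inL b -> inL (a * b).
  move=> a b ha hb P PC Pi Ps; case: (PC) => _ _ hM _.
  exact: hM (ha P PC Pi Ps) (hb P PC Pi Ps).
have LV : forall a, inL a -> inL a^-1.
  move=> a ha P PC Pi Ps; case: (PC) => _ _ _ hV.
  exact: hV (ha P PC Pi Ps).
have Lc : forall c, inL (iota c) by move=> c P _ Pi _.
have Lb2 : inL b2 by move=> P _ _ Ps; apply: (Ps); rewrite !inE eqxx ?orbT.
have Lb3 : inL b3 by move=> P _ _ Ps; apply: (Ps); rewrite !inE eqxx ?orbT.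
have La2 : inL a2 by move=> P _ _ Ps; apply: (Ps); rewrite !inE eqxx ?orbT.
have La3 : inL a3 by move=> P _ _ Ps; apply: (Ps); rewrite !inE eqxx ?orbT.
have L0 : inL 0 by rewrite -(subrr 1); apply: (LB).
have LN : forall a, inL a -> inL (- a) by move=> a ha; rewrite -sub0r; apply: (LB).
have LD : forall a b, inL a -> inL b -> inL (a + b).
  by move=> a b ha hb; rewrite -[b]opprK; apply: (LB) => //; apply: (LN).
have LX : forall a n, inL a -> inL (a ^+ n).
  by move=> a n ha; elim: n => [|n IH]; rewrite ?expr0 // exprS; apply: (LM).
have LI : inL I by apply: (Lc).
have Lu : inL (x1 ^+ 2).
  rewrite hu2; apply: (LM); last apply: (LV); apply: (LB) => //; apply: (LX) => //.
have Lfix : forall a, inL a -> g a = a.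
  move=> a ha; apply: (ha (fun z => g z = z)).
  - split.
    + by rewrite rmorph1.
    + by move=> p q hp hq; rewrite rmorphB hp hq.
    + by move=> p q hp hq; rewrite rmorphM hp hq.
    + by move=> p hp; rewrite fmorphV hp.
  - exact: hgk.
  - have hI0 : I != 0.
      apply/eqP => h; move: I2; rewrite h mul0r => /eqP.
      by rewrite eq_sym oppr_eq0 oner_eq0.
    move=> s; rewrite !inE => /orP[/eqP->|/orP[/eqP->|/orP[/eqP->|/eqP->]]];
      rewrite fmorph_div ?hgx2 ?hgx3 ?hgx1 ?hgy2 ?hgy3 ?hgy1.
    + by rewrite invrN mulrNN.
    + by rewrite invrN mulrNN.
    + by rewrite invfM mulrACA divff // mul1r.
    + by rewrite invfM mulrACA divff // mul1r.
pose F a b c d := a + b * x1 + c * y1 + d * (x1 * y1).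
pose inM z := exists a b c d, [/\ inL a, inL b, inL c & inL d] /\ z = F a b c d.
have MsL : forall a, inL a -> inM a.
  move=> a ha; exists a, 0, 0, 0; split => //.
  by rewrite /F !mul0r !addr0.
have MB : forall w w', inM w -> inM w' -> inM (w - w').
  move=> w w' [a [b [c [d [[ha hb hc hd] ->]]]]] [a' [b' [c' [d' [[ha' hb' hc' hd'] ->]]]]].
  exists (a - a'), (b - b'), (c - c'), (d - d'); split; first by split; apply: (LB).
  rewrite /F; ring.
have MD : forall w w', inM w -> inM w' -> inM (w + w').
  move=> w w' [a [b [c [d [[ha hb hc hd] ->]]]]] [a' [b' [c' [d' [[ha' hb' hc' hd'] ->]]]]].
  exists (a + a'), (b + b'), (c + c'), (d + d'); split; first by split; apply: (LD).
  rewrite /F; ring.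
have MsM : forall s w, inL s -> inM w -> inM (s * w).
  move=> s w hs [a [b [c [d [[ha hb hc hd] ->]]]]].
  exists (s * a), (s * b), (s * c), (s * d); split; first by split; apply: (LM).
  rewrite /F; ring.
have Mx : forall w, inM w -> inM (x1 * w).
  move=> w [a [b [c [d [[ha hb hc hd] ->]]]]].
  exists (b * x1 ^+ 2), a, (d * x1 ^+ 2), c; split; first by split => //; apply: (LM).
  rewrite /F; ring.
have My : forall w, inM w -> inM (y1 * w).
  move=> w [a [b [c [d [[ha hb hc hd] ->]]]]].
  exists (d * x1 ^+ 2 * (x1 ^+ 2 - 1)), (c * (x1 ^+ 2 - 1)), a, b; split.
    by split => //; [apply: (LM) (LM _ _ hd Lu) (LB _ _ Lu L1) | apply: (LM) _ _ hc (LB _ _ Lu L1)].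
  apply/eqP; rewrite -subr_eq0; apply/eqP.
  transitivity ((y1 ^+ 2 - x1 * (x1 ^+ 2 - 1)) * (c + d * x1)); first by rewrite /F; ring.
  by rewrite hy1 subrr mul0r.
have MM : forall w w', inM w -> inM w' -> inM (w * w').
  move=> w w' [a [b [c [d [[ha hb hc hd] ->]]]]] hw'.
  have -> : F a b c d * w' = a * w' + b * (x1 * w') + c * (y1 * w') + d * (x1 * (y1 * w')).
    by rewrite /F; ring.
  apply: (MD); [apply: (MD); [apply: (MD)|]|].
  - exact: MsM.
  - by apply: (MsM) => //; apply: (Mx).
  - by apply: (MsM) => //; apply: (My).
  - by apply: (MsM) => //; apply: (Mx); apply: (My).
have gform : forall a b c d, inL a -> inL b -> inL c -> inL d ->
    g (F a b c d) = F a (- b) (I * c) (- (I * d)).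
  move=> a b c d ha hb hc hd.
  rewrite /F !rmorphD !rmorphM (Lfix a) // (Lfix b) // (Lfix c) // (Lfix d) // hgx1 hgy1; ring.
have Avg : forall w, inM w -> exists a, inL a /\
    w + g w + g (g w) + g (g (g w)) = 4 * a /\ g (g (g (g w))) = w.
  move=> w [a [b [c [d [[ha hb hc hd] ->]]]]].
  have G1 := gform a b c d ha hb hc hd.
  have hb1 := LN _ hb; have hc1 := LM _ _ LI hc; have hd1 := LN _ (LM _ _ LI hd).
  have G2 := gform _ _ _ _ ha hb1 hc1 hd1.
  have hb2 := LN _ hb1; have hc2 := LM _ _ LI hc1; have hd2 := LN _ (LM _ _ LI hd1).
  have G3 := gform _ _ _ _ ha hb2 hc2 hd2.
  have hb3 := LN _ hb2; have hc3 := LM _ _ LI hc2; have hd3 := LN _ (LM _ _ LI hd2).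
  have G4 := gform _ _ _ _ ha hb3 hc3 hd3.
  exists a; split => //; rewrite G1 G2 G3; split.
    apply/eqP; rewrite -subr_eq0; apply/eqP.
    transitivity ((1 + I * I) * (c * (1 + I) * y1 + d * (1 - I) * (x1 * y1))).
      by rewrite /F; ring.
    by rewrite I2 addrN mul0r.
  rewrite G4; apply/eqP; rewrite -subr_eq0; apply/eqP.
  transitivity ((1 + I * I) * (I * I - 1) * (c * y1 + d * (x1 * y1))).
    by rewrite /F; ring.
  by rewrite I2 addrN mul0r mul0r.
have FixL : forall w, inM w -> g w = w -> inL w.
  move=> w hw gw; have [a [ha [E _]]] := Avg w hw.
  move: E; rewrite !gw => E.
  have -> : w = a; last exact: ha.
  apply: (mulfI h4); rewrite -E; ring.
have Mg : forall w, inM w -> inM (g w).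
  move=> w [a [b [c [d [[ha hb hc hd] ->]]]]].
  rewrite gform //; exists a, (- b), (I * c), (- (I * d)).
  by split => //; split => //; [apply: (LN) | apply: (LM) | apply: (LN); apply: (LM)].
have MV : forall w, inM w -> inM w^-1.
  move=> w hw; have [->|nw] := eqVneq w 0; first by rewrite invr0; apply: (MsL).
  have [a [ha [_ G4]]] := Avg w hw.
  pose w1 := g w; pose w2 := g w1; pose w3 := g w2.
  have hw1 : inM w1 by apply: (Mg).
  have hw2 : inM w2 by apply: (Mg).
  have hw3 : inM w3 by apply: (Mg).
  have nw1 : w1 != 0 by rewrite /w1 fmorph_eq0.
  have nw2 : w2 != 0 by rewrite /w2 fmorph_eq0.
  have nw3 : w3 != 0 by rewrite /w3 fmorph_eq0.
  pose N := w * w1 * w2 * w3.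
  have hN : inM N by apply: (MM) => //; apply: (MM) => //; apply: (MM).
  have gN : g N = N.
    by rewrite /N !rmorphM -/w1 -/w2 -/w3 /w3 /w2 /w1 G4; ring.
  have LN' : inL N by apply: (FixL).
  have -> : w^-1 = N^-1 * (w1 * w2 * w3).
    by rewrite /N; field; rewrite nw nw1 nw2 nw3.
  by apply: (MsM); [apply: (LV) | apply: (MM) => //; apply: (MM)].
have Mall : forall z, inM z.
  move=> z; apply: hgen.
  - split.
    + exact: MsL.
    + exact: MB.
    + exact: MM.
    + exact: MV.
  - by move=> c; apply: (MsL).
  - have Mx1 : inM x1.
      by exists 0, 1, 0, 0; split => //; rewrite /F !mul0r !addr0 add0r mul1r.
    have My1 : inM y1.
      by exists 0, 0, 1, 0; split => //; rewrite /F !mul0r !addr0 add0r mul1r.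
    move=> s; rewrite !inE => /orP[/eqP->|/orP[/eqP->|/orP[/eqP->|/orP[/eqP->|/orP[/eqP->|/eqP->]]]]] //.
    + by rewrite -(divfK nx1 x2); apply: (MsM).
    + by rewrite -(divfK nx1 x3); apply: (MsM).
    + by rewrite -(divfK ny1 y2); apply: (MsM).
    + by rewrite -(divfK ny1 y3); apply: (MsM).
move=> z; split.
- by move=> gz; apply: (FixL).
- exact: Lfix.
Qed.
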